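(* Let $(M_I,\triangleright)$ and $(N_J,\triangleright)$ be factor systems. Then their function space $[M_I\to N_J]$ is a factor system. Moreover: (1) If the relations $\triangleright$ on $N_J$ satisfy (Fun), resp. (Stab), then so do the relations $\triangleright$ on $[M_I\to N_J]$. (2) If $M_I$ is inverse and $N_J$ is direct, then $[M_I\to N_J]$ is direct. (3) If $M_I$ is direct and $N_J$ is inverse, then $[M_I\to N_J]$ is inverse.
   Context: Let $(I,\le)$ be a non-empty directed preordered set. A system $(M_I,\triangleright)$ consists of sets $M_i$ ($i\in I$, regarded as pairwise disjoint) and, for $i\le i'$, relations $\triangleright\subseteq M_{i'}\times M_i$ (written $a_{i'}\triangleright a_i$), reflexive when $i=i'$. Elements $a_i\in M_i$, $b_j\in M_j$ are consistent, $a_i\approx b_j$, iff there are $i'\ge i,j$ and $c\in M_{i'}$ with $c\triangleright a_i$ and $c\triangleright b_j$. A prefactor system is a system with $a_{i'}\approx a_i\iff a_{i'}\triangleright a_i$ for all $i\le i'$. Condition (Fun): for all $i$ and $a_i,b_i\in M_i$, $a_i\approx b_i\iff a_i\triangleright b_i\iff a_i=b_i$. Condition (Stab): for all $i\le i'$, $a_{i'}\in M_{i'}$, $a_i,b_i\in M_i$: $a_{i'}\triangleright a_i$ and $a_i\approx b_i$ imply $a_{i'}\triangleright b_i$. $\approx$-embeddings: $\approx$-preserving maps $emb_{i,i'}:M_i\to M_{i'}$ ($i\le i'$) with $emb_{i,i}(a)\approx a$, $emb_{i',i''}(emb_{i,i'}(a))\approx emb_{i,i''}(a)$; coherent if $a_{i'}\triangleright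 a_i\Rightarrow emb_{i',i''}(a_{i'})\triangleright a_i$ for $i\le i'\le i''$. $\approx$-projections: $\approx$-preserving maps $proj_{i',i}:M_{i'}\to M_i$ with $proj_{i,i}(a)\approx a$, $proj_{i',i}(proj_{i'',i'}(a))\approx proj_{i'',i}(a)$; coherent if $a_{i''}\triangleright a_i\Rightarrow proj_{i'',i'}(a_{i''})\triangleright a_i$ for $i\le i'\le i''$. They form an $\approx$-embedding-projection pair if $proj_{i',i}(emb_{i,i'}(a))\approx a$. A factor system is a prefactor system with a coherent $\approx$-embedding-projection pair. A prefactor system is direct iff it has coherent $\approx$-embeddings with $a_{i'}\triangleright a_i\iff a_{i'}\approx emb_{i,i'}(a_i)$; inverse iff it has coherent $\approx$-projections with $a_{i'}\triangleright a_i\iff proj_{i',i}(a_{i'})\approx a_i$. Function space: for factor systems $M_I,N_J$, $[M_I\to N_J]$ is indexed by $I\times J$ with the product order, an index written $i\to j$; its state $[M_i\to N_j]$ is the set of all total functions $f:M_i\to N_j$ with $a\approx b\Rightarrow f(a)\approx f(b)$. For $i\to j\le i'\to j'$, $f'\triangleright f$ iff for all $a_{i'}\in M_{i'}$, $a_i\in M_i$ with $a_{i'}\triangleright a_i$ we have $f'(a_{i'})\triangleright f(a_i)$. Embeddings $emb_{i\to j,i'\to j'}(f)=emb_{j,j'}\circ f\circ proj_{i',i}$ and projections $proj_{i'\to j',i\to j}(f')=proj_{j',j}\circ f'\circ emb_{i,i'}$. *)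

(* Defs.v *)
Set Implicit Arguments.
Unset Strict Implicit.

Record dpreorder := DPreorder {
  idx :> Type;
  le : idx -> idx -> Prop;
  le_refl : forall i, le i i;
  le_trans : forall i j k, le i j -> le j k -> le i k;
  le_directed : forall i j, exists k, le i k /\ le j k;
  idx_inhabited : inhabited idx }.

(** Data of a system: states M_i (a dependent family, hence pairwise disjoint)
    and relations rel a' a  (read  a' |> a ), meaningful for i <= i'. *)
Record sysdata (I : dpreorder) := SysData {
  st : I -> Type;
  rel : forall i i' : I, st i' -> st i -> Prop }.
Arguments st {I} s i.
Arguments rel {I} s {i i'} _ _.
Arguments le : clear implicits.

Section Sys.
Context {I : dpreorder} (S : sysdata I).

Definition cons {i j : I} (a : st S i) (b : st S j) : Prop :=
  exists (i' : I) (c : st S i'), le I i i' /\ le I j i' /\ rel S c a /\ rel S c b.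

Definition is_system : Prop := forall i (a : st S i), rel S a a.

Definition prefactor : Prop :=
  is_system /\
  forall (i i' : I), le I i i' -> forall (a' : st S i') (a : st S i),
    cons a' a <-> rel S a' a.

Definition Fun : Prop :=
  forall i (a b : st S i), (cons a b <-> rel S a b) /\ (rel S a b <-> a = b).

Definition Stab : Prop :=
  forall (i i' : I), le I i i' -> forall (a' : st S i') (a b : st S i),
    rel S a' a -> cons a b -> rel S a' b.

Definition emb_family := forall i i' : I, le I i i' -> st S i -> st S i'.
Definition proj_family := forall i i' : I, le I i i' -> st S i' -> st S i.

Definition is_embeddings (emb : emb_family) : Prop :=
  (forall i i' (H : le I i i') (a b : st S i), cons a b -> cons (emb i i' H a) (emb i i' H b)) /\
  (forall i (H : le I i i) (a : st S i), cons (emb i i H a) a) /\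
  (forall i i' i'' (H1 : le I i i') (H2 : le I i' i'') (H3 : le I i i'') (a : st S i),
     cons (emb i' i'' H2 (emb i i' H1 a)) (emb i i'' H3 a)).

Definition coherent_emb (emb : emb_family) : Prop :=
  forall i i' i'' (H1 : le I i i') (H2 : le I i' i'') (a' : st S i') (a : st S i),
    rel S a' a -> rel S (emb i' i'' H2 a') a.

Definition is_projections (proj : proj_family) : Prop :=
  (forall i i' (H : le I i i') (a b : st S i'), cons a b -> cons (proj i i' H a) (proj i i' H b)) /\
  (forall i (H : le I i i) (a : st S i), cons (proj i i H a) a) /\
  (forall i i' i'' (H1 : le I i i') (H2 : le I i' i'') (H3 : le I i i'') (a : st S i''),
     cons (proj i i' H1 (proj i' i'' H2 a)) (proj i i'' H3 a)).

Definition coherent_proj (proj : proj_family) : Prop :=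
  forall i i' i'' (H1 : le I i i') (H2 : le I i' i'') (a'' : st S i'') (a : st S i),
    rel S a'' a -> rel S (proj i' i'' H2 a'') a.

Definition factor : Prop :=
  prefactor /\
  exists (emb : emb_family) (proj : proj_family),
    is_embeddings emb /\ coherent_emb emb /\
    is_projections proj /\ coherent_proj proj /\
    (forall i i' (H : le I i i') (a : st S i), cons (proj i i' H (emb i i' H a)) a).

Definition direct : Prop :=
  prefactor /\
  exists emb : emb_family, is_embeddings emb /\ coherent_emb emb /\
    forall i i' (H : le I i i') (a' : st S i') (a : st S i),
      rel S a' a <-> cons a' (emb i i' H a).

Definition inverse : Prop :=
  prefactor /\
  exists proj : proj_family, is_projections proj /\ coherent_proj proj /\
    forall i i' (H : le I i i') (a' : st S i') (a : st S i),
      rel S a' a <-> cons (proj i i' H a') a.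

End Sys.
Arguments cons {I} S {i j} _ _.

Definition prod_dpreorder (I J : dpreorder) : dpreorder.
Proof.
  refine (@DPreorder (idx I * idx J)
            (fun p q => le I (fst p) (fst q) /\ le J (snd p) (snd q)) _ _ _ _).
  - intros [i j]; split; apply le_refl.
  - intros [i j] [i' j'] [i'' j''] [H1 H2] [H3 H4]; split; eapply le_trans; eauto.
  - intros [i j] [i' j'].
    destruct (le_directed i i') as [k [Hk1 Hk2]].
    destruct (le_directed j j') as [l [Hl1 Hl2]].
    exists (k, l); simpl; tauto.
  - destruct (idx_inhabited I) as [i]; destruct (idx_inhabited J) as [j];
      exact (inhabits (i, j)).
Defined.

Definition fs_st {I J : dpreorder} (M : sysdata I) (N : sysdata J)
  (p : prod_dpreorder I J) : Type :=
  { f : st M (fst p) -> st N (snd p) |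
    forall a b : st M (fst p), cons M a b -> cons N (f a) (f b) }.

Definition fs_rel {I J : dpreorder} (M : sysdata I) (N : sysdata J)
  (p p' : prod_dpreorder I J) (f' : fs_st M N p') (f : fs_st M N p) : Prop :=
  forall (a' : st M (fst p')) (a : st M (fst p)),
    rel M a' a -> rel N (proj1_sig f' a') (proj1_sig f a).

Definition fun_space {I J : dpreorder} (M : sysdata I) (N : sysdata J)
  : sysdata (prod_dpreorder I J) :=
  @SysData (prod_dpreorder I J) (fs_st M N) (@fs_rel I J M N).

(* Main.v *)
Require Import Defs.
From Stdlib Require Import FunctionalExtensionality ProofIrrelevance.
Set Implicit Arguments.

Section PF.
Context {I : dpreorder} (S : sysdata I) (HP : prefactor S).

Lemma pf_refl i (a : st S i) : rel S a a.
Proof. exact (proj1 HP i a). Qed.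

Lemma pf_same i (a b : st S i) : cons S a b <-> rel S a b.
Proof. exact (proj2 HP i i (@le_refl I i) a b). Qed.

Lemma pf_sym i (a b : st S i) : rel S a b -> rel S b a.
Proof.
  intros H. apply pf_same. exists i, a.
  split; [apply le_refl|]. split; [apply le_refl|]. split; [exact H|apply pf_refl].
Qed.

Lemma pf_trans i (a b c : st S i) : rel S a b -> rel S b c -> rel S a c.
Proof.
  intros H1 H2. apply pf_same. exists i, b.
  split; [apply le_refl|]. split; [apply le_refl|]. split; [apply pf_sym; exact H1|exact H2].
Qed.
End PF.

Lemma pres {I J : dpreorder} (S : sysdata I) (T : sysdata J)
  (HS : prefactor S) (HT : prefactor T) i j (g : st S i -> st T j)
  (Hg : forall a b, cons S a b -> cons T (g a) (g b)) (a b : st S i) :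
  rel S a b -> rel T (g a) (g b).
Proof.
  intros H. apply (pf_same HT). apply Hg. apply (pf_same HS). exact H.
Qed.

Section FS.
Context {I J : dpreorder} (M : sysdata I) (N : sysdata J)
  (HM : prefactor M) (HN : prefactor N).

Notation F := (fun_space M N).
Notation P := (prod_dpreorder I J).

Lemma fs_rel_intro (p p' : P) (f' : st F p') (f : st F p) :
  (forall (a' : st M (fst p')) (a : st M (fst p)), rel M a' a -> rel N (proj1_sig f' a') (proj1_sig f a)) ->
  rel F f' f.
Proof. exact (fun H => H). Qed.

Lemma fs_rel_elim (p p' : P) (f' : st F p') (f : st F p) :
  rel F f' f ->
  (forall (a' : st M (fst p')) (a : st M (fst p)), rel M a' a -> rel N (proj1_sig f' a') (proj1_sig f a)).
Proof. exact (fun H => H). Qed.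

Lemma fs_pres (p : P) (f : st F p) (a b : st M (fst p)) :
  rel M a b -> rel N (proj1_sig f a) (proj1_sig f b).
Proof. apply (pres HM HN). exact (proj2_sig f). Qed.

Lemma fs_prefactor (eM : emb_family M) (ceM : coherent_emb eM) : prefactor F.
Proof.
  split.
  - intros p f. apply fs_rel_intro. intros a' a Ha. apply fs_pres. exact Ha.
  - intros p p' H f' f. split.
    + intros [p'' [g [H1 [H2 [Hg1 Hg2]]]]].
      apply fs_rel_intro. intros a' a Ha.
      pose (a'' := eM (fst p') (fst p'') (proj1 H1) a').
      assert (R1 : rel M a'' a').
      { apply (ceM (fst p') (fst p') (fst p'') (@le_refl I _) (proj1 H1)). apply (pf_refl HM). }
      assert (R2 : rel M a'' a).
      { apply (ceM (fst p) (fst p') (fst p'') (proj1 H) (proj1 H1)). exact Ha. }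
      apply (proj2 HN _ _ (proj2 H)).
      exists (snd p''), (proj1_sig g a''). split; [exact (proj2 H1)|]. split; [exact (proj2 H2)|].
      split; [apply (fs_rel_elim Hg1); exact R1 | apply (fs_rel_elim Hg2); exact R2].
    + intros Hr. exists p', f'. split; [apply le_refl|]. split; [exact H|]. split; [|exact Hr].
      apply fs_rel_intro. intros a' a Ha. apply fs_pres. exact Ha.
Qed.
End FS.
Section FS2.
Context {I J : dpreorder} (M : sysdata I) (N : sysdata J)
  (HM : prefactor M) (HN : prefactor N).

Notation F := (fun_space M N).
Notation P := (prod_dpreorder I J).

Definition fs_emb (eN : emb_family N) (pM : proj_family M)
  (HeN : is_embeddings eN) (HpM : is_projections pM) : emb_family F :=
  fun p p' H f => exist (fun g => forall a b, cons M a b -> cons N (g a) (g b))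
    (fun a => eN (snd p) (snd p') (proj2 H) (proj1_sig f (pM (fst p) (fst p') (proj1 H) a)))
    (fun a b Hab => proj1 HeN _ _ (proj2 H) _ _ (proj2_sig f _ _ (proj1 HpM _ _ (proj1 H) _ _ Hab))).

Definition fs_proj (pN : proj_family N) (eM : emb_family M)
  (HpN : is_projections pN) (HeM : is_embeddings eM) : proj_family F :=
  fun p p' H f => exist (fun g => forall a b, cons M a b -> cons N (g a) (g b))
    (fun a => pN (snd p) (snd p') (proj2 H) (proj1_sig f (eM (fst p) (fst p') (proj1 H) a)))
    (fun a b Hab => proj1 HpN _ _ (proj2 H) _ _ (proj2_sig f _ _ (proj1 HeM _ _ (proj1 H) _ _ Hab))).

Variables (eN : emb_family N) (pM : proj_family M) (HeN : is_embeddings eN) (HpM : is_projections pM)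
  (ceN : coherent_emb eN) (cpM : coherent_proj pM)
  (pN : proj_family N) (eM : emb_family M) (HpN : is_projections pN) (HeM : is_embeddings eM)
  (cpN : coherent_proj pN) (ceM : coherent_emb eM).

Let HF := fs_prefactor HM HN ceM.

Lemma presE j j' (H : le J j j') (x y : st N j) : rel N x y -> rel N (eN j j' H x) (eN j j' H y).
Proof. apply (pres HN HN). apply (proj1 HeN). Qed.
Lemma presP i i' (H : le I i i') (x y : st M i') : rel M x y -> rel M (pM i i' H x) (pM i i' H y).
Proof. apply (pres HM HM). apply (proj1 HpM). Qed.
Lemma presP' j j' (H : le J j j') (x y : st N j') : rel N x y -> rel N (pN j j' H x) (pN j j' H y).
Proof. apply (pres HN HN). apply (proj1 HpN). Qed.
Lemma presE' i i' (H : le I i i') (x y : st M i) : rel M x y -> rel M (eM i i' H x) (eM i i' H y).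
Proof. apply (pres HM HM). apply (proj1 HeM). Qed.

Lemma fs_emb_is : is_embeddings (fs_emb HeN HpM).
Proof.
  split; [|split].
  - intros p p' H f g Hfg. apply (pf_same HF). apply (pf_same HF) in Hfg.
    apply fs_rel_intro. intros a' a Ha. simpl.
    apply presE. apply (fs_rel_elim Hfg). apply presP. exact Ha.
  - intros p H f. apply (pf_same HF). apply fs_rel_intro. intros a' a Ha. simpl.
    apply (ceN _ _ _ (proj2 H) (proj2 H)). apply fs_pres; auto.
    apply (cpM _ _ _ (proj1 H) (proj1 H)). exact Ha.
  - intros p p' p'' H1 H2 H3 f. apply (pf_same HF). apply fs_rel_intro. intros a' a Ha. simpl.
    eapply (pf_trans HN).
    + apply (pf_same HN). apply (proj2 (proj2 HeN)).
    + apply presE. apply fs_pres; auto. eapply (pf_trans HM).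
      * apply (pf_same HM). apply (proj2 (proj2 HpM)).
      * apply presP. exact Ha.
Qed.

Lemma fs_emb_coh : coherent_emb (fs_emb HeN HpM).
Proof.
  intros p p' p'' H1 H2 f' f Hf. apply fs_rel_intro. intros a'' a Ha. simpl.
  apply (ceN _ _ _ (proj2 H1) (proj2 H2)). apply (fs_rel_elim Hf).
  apply (cpM _ _ _ (proj1 H1) (proj1 H2)). exact Ha.
Qed.

Lemma fs_proj_is : is_projections (fs_proj HpN HeM).
Proof.
  split; [|split].
  - intros p p' H f g Hfg. apply (pf_same HF). apply (pf_same HF) in Hfg.
    apply fs_rel_intro. intros a' a Ha. simpl.
    apply presP'. apply (fs_rel_elim Hfg). apply presE'. exact Ha.
  - intros p H f. apply (pf_same HF). apply fs_rel_intro. intros a' a Ha. simpl.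
    apply (cpN _ _ _ (proj2 H) (proj2 H)). apply fs_pres; auto.
    apply (ceM _ _ _ (proj1 H) (proj1 H)). exact Ha.
  - intros p p' p'' H1 H2 H3 f. apply (pf_same HF). apply fs_rel_intro. intros a' a Ha. simpl.
    eapply (pf_trans HN).
    + apply (pf_same HN). apply (proj2 (proj2 HpN)).
    + apply presP'. apply fs_pres; auto. eapply (pf_trans HM).
      * apply (pf_same HM). apply (proj2 (proj2 HeM)).
      * apply presE'. exact Ha.
Qed.

Lemma fs_proj_coh : coherent_proj (fs_proj HpN HeM).
Proof.
  intros p p' p'' H1 H2 f' f Hf. apply fs_rel_intro. intros a'' a Ha. simpl.
  apply (cpN _ _ _ (proj2 H1) (proj2 H2)). apply (fs_rel_elim Hf).
  apply (ceM _ _ _ (proj1 H1) (proj1 H2)). exact Ha.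
Qed.

Lemma fs_ep
  (epM : forall i i' (H : le I i i') (a : st M i), cons M (pM i i' H (eM i i' H a)) a)
  (epN : forall i i' (H : le J i i') (a : st N i), cons N (pN i i' H (eN i i' H a)) a) :
  forall p p' (H : le P p p') (f : st F p),
    cons F (fs_proj HpN HeM H (fs_emb HeN HpM H f)) f.
Proof.
  intros p p' H f. apply (pf_same HF). apply fs_rel_intro. intros a' a Ha. simpl.
  eapply (pf_trans HN).
  - apply (pf_same HN). apply epN.
  - apply fs_pres; auto. eapply (pf_trans HM).
    + apply (pf_same HM). apply epM.
    + exact Ha.
Qed.
End FS2.
Section FS3.
Context {I J : dpreorder} (M : sysdata I) (N : sysdata J)
  (HM : prefactor M) (HN : prefactor N) (eM0 : emb_family M) (ceM0 : coherent_emb eM0).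

Notation F := (fun_space M N).
Let HF := fs_prefactor HM HN ceM0.

Lemma fs_Fun : Fun N -> Fun F.
Proof.
  intros HFun p f g. split; [apply (pf_same HF)|]. split.
  - intros Hfg.
    assert (E : forall a, proj1_sig f a = proj1_sig g a).
    { intros a. apply (proj2 (HFun _ _ _)). apply (fs_rel_elim Hfg). apply (pf_refl HM). }
    apply functional_extensionality in E.
    destruct f as [f Hf], g as [g Hg]. simpl in E. subst g.
    f_equal. apply proof_irrelevance.
  - intros <-. apply (pf_refl HF).
Qed.

Lemma fs_Stab : Stab N -> Stab F.
Proof.
  intros HS p p' H f' f g Hf' Hfg. apply (pf_same HF) in Hfg.
  apply fs_rel_intro. intros a' a Ha.
  apply (HS _ _ (proj2 H) _ (proj1_sig f a)).
  - apply (fs_rel_elim Hf'). exact Ha.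
  - apply (pf_same HN). apply (fs_rel_elim Hfg). apply (pf_refl HM).
Qed.
End FS3.

Theorem proposition2p7 (I J : dpreorder) (M : sysdata I) (N : sysdata J) :
  factor M -> factor N ->
  factor (fun_space M N) /\
  (Fun N -> Fun (fun_space M N)) /\
  (Stab N -> Stab (fun_space M N)) /\
  (inverse M -> direct N -> direct (fun_space M N)) /\
  (direct M -> inverse N -> inverse (fun_space M N)).
Proof.
  intros [HM [eM [pM [HeM [ceM [HpM [cpM epM]]]]]]] [HN [eN [pN [HeN [ceN [HpN [cpN epN]]]]]]].
  pose proof (fs_prefactor HM HN ceM) as HF.
  split; [|split; [|split; [|split]]].
  - split; [exact HF|].
    exists (fs_emb HeN HpM), (fs_proj HpN HeM).
    split; [eapply fs_emb_is; eauto|]. split; [apply fs_emb_coh; auto|].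
    split; [eapply fs_proj_is; eauto|]. split; [apply fs_proj_coh; auto|].
    apply fs_ep; auto.
  - apply (fs_Fun HM HN ceM).
  - apply (fs_Stab HM HN ceM).
  - intros [_ [pM' [HpM' [cpM' invM]]]] [_ [eN' [HeN' [ceN' dirN]]]].
    split; [exact HF|]. exists (fs_emb HeN' HpM').
    split; [eapply fs_emb_is; eauto|]. split; [apply fs_emb_coh; auto|].
    intros p p' H f' f. split.
    + intros Hf. apply (pf_same HF). apply fs_rel_intro. intros a' a Ha. simpl.
      apply (pf_same HN). apply (proj1 (dirN _ _ (proj2 H) _ _)). apply (fs_rel_elim Hf).
      apply (proj2 (invM _ _ (proj1 H) _ _)). apply (pf_same HM). apply (presP HM HpM'). exact Ha.
    + intros Hc. apply (pf_same HF) in Hc.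
      apply fs_rel_intro. intros a' a Ha.
      apply (proj2 (dirN _ _ (proj2 H) _ _)). apply (pf_same HN).
      eapply (pf_trans HN).
      * apply (fs_rel_elim Hc a' a'). apply (pf_refl HM).
      * simpl. apply (presE HN HeN'). apply fs_pres; auto.
        apply (pf_same HM). apply (proj1 (invM _ _ (proj1 H) _ _)). exact Ha.
  - intros [_ [eM' [HeM' [ceM' dirM]]]] [_ [pN' [HpN' [cpN' invN]]]].
    split; [exact HF|]. exists (fs_proj HpN' HeM').
    split; [eapply fs_proj_is; eauto|]. split; [apply fs_proj_coh; auto|].
    intros p p' H f' f. split.
    + intros Hf. apply (pf_same HF). apply fs_rel_intro. intros a' a Ha. simpl.
      apply (pf_same HN). apply (proj1 (invN _ _ (proj2 H) _ _)). apply (fs_rel_elim Hf).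
      apply (proj2 (dirM _ _ (proj1 H) _ _)). apply (pf_same HM). apply (presE' HM HeM'). exact Ha.
    + intros Hc. apply (pf_same HF) in Hc.
      apply fs_rel_intro. intros a' a Ha.
      apply (proj2 (invN _ _ (proj2 H) _ _)). apply (pf_same HN).
      apply (pf_trans HN) with (b := pN' _ _ (proj2 H) (proj1_sig f' (eM' _ _ (proj1 H) a))).
      * simpl. apply (presP' HN HpN'). apply fs_pres; auto.
        apply (pf_same HM). apply (proj1 (dirM _ _ (proj1 H) _ _)). exact Ha.
      * apply (fs_rel_elim Hc a a). apply (pf_refl HM).
Qed.
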